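(* Let $E\in\mathcal{E}_n$ be an extreme point of $\mathcal{E}_n$ with $r=\mathrm{rank}(E)$, and let $u_1,\ldots,u_n\in\mathbb{R}^r$ satisfy $E=\mathrm{Gram}(u_1,\ldots,u_n)$ and $\mathrm{span}(u_1,\ldots,u_n)=\mathbb{R}^r$. Let $d\ge 1$ and let $Q_1,Q_2:\mathbb{R}^r\to\mathcal{H}_d$ be operator valued quadratic maps such that $Q_1(u_i)=Q_2(u_i)$ for all $i\in\{1,\ldots,n\}$. Then $Q_1=Q_2$.
   Context: $\mathcal{E}_n$ denotes the elliptope: the set of real symmetric positive semidefinite $n\times n$ matrices with all diagonal entries equal to $1$; an extreme point is a point not expressible as a proper convex combination of two distinct points of $\mathcal{E}_n$. $\mathrm{Gram}(u_1,\ldots,u_n)$ is the $n\times n$ matrix with entries $\langle u_i,u_j\rangle$ (standard inner product on $\mathbb{R}^r$). $\mathcal{H}_d$ is the real vector space of $d\times d$ complex Hermitian matrices. An operator valued quadratic map $Q:\mathbb{R}^r\to\mathcal{H}_d$ is a map of the form $Q(x)=\sum_{k,l=1}^r x_kx_l H_{kl}$ for some Hermitian matrices $H_{kl}\in\mathcal{H}_d$ (equivalently, every real coordinate of $Q$, viewing $\mathcal{H}_d\cong\mathbb{R}^{d^2}$, is a real quadratic form on $\mathbb{R}^r$). *)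

(* Defs.v *)
From HB Require Import structures.
From mathcomp Require Import all_boot all_order all_algebra.
From mathcomp Require Import complex.
Set Implicit Arguments. Unset Strict Implicit. Unset Printing Implicit Defensive.
Import Order.TTheory GRing.Theory Num.Theory.
Local Open Scope ring_scope.
Local Open Scope complex_scope.

Definition psd (R : rcfType) (n : nat) (A : 'M[R]_n) : Prop :=
  A^T = A /\ forall v : 'rV[R]_n, 0 <= (v *m A *m v^T) 0 0.

Definition elliptope (R : rcfType) (n : nat) (A : 'M[R]_n) : Prop :=
  psd A /\ forall i : 'I_n, A i i = 1.

Definition extreme_elliptope (R : rcfType) (n : nat) (E : 'M[R]_n) : Prop :=
  elliptope E /\
  forall (A B : 'M[R]_n) (t : R), elliptope A -> elliptope B ->
    0 < t -> t < 1 -> E = t *: A + (1 - t) *: B -> A = B.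

Definition Gram (R : rcfType) (n r : nat) (U : 'M[R]_(n, r)) : 'M[R]_n :=
  U *m U^T.

Definition herm_mx (R : rcfType) (d : nat) (H : 'M[R[i]]_d) : Prop :=
  forall i j, H i j = (H j i)^*.

Definition quad_map (R : rcfType) (r d : nat) (H : 'I_r -> 'I_r -> 'M[R[i]]_d)
  (x : 'rV[R]_r) : 'M[R[i]]_d :=
  \sum_(k < r) \sum_(l < r) ((x 0 k * x 0 l)%:C *: H k l).

(* Main.v *)
Require Import Defs.
From HB Require Import structures.
From mathcomp Require Import all_boot all_order all_algebra.
From mathcomp Require Import complex.
From mathcomp Require Import ring lra.
Import Order.TTheory GRing.Theory Num.Theory.
Local Open Scope ring_scope.

Section Aux.
Variable R : rcfType.

Lemma mul_self_ge0 (x : R) : 0 <= x * x.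
Proof. by rewrite -expr2 sqr_ge0. Qed.

Definition qf (r : nat) (C : 'M[R]_r) (x : 'rV[R]_r) : R := (x *m C *m x^T) 0 0.

Arguments qf {r}.

Lemma qfE {r} (C : 'M[R]_r) x :
  qf C x = \sum_(k < r) \sum_(l < r) x 0 k * x 0 l * C k l.
Proof.
rewrite /qf mxE.
under eq_bigr => l _ do rewrite !mxE big_distrl /=.
rewrite exchange_big /=; apply: eq_bigr => k _; apply: eq_bigr => l _.
by rewrite mulrAC.
Qed.

Lemma qf_tr {r} (C : 'M[R]_r) x : qf C^T x = qf C x.
Proof.
rewrite /qf; have -> : x *m C^T *m x^T = (x *m C *m x^T)^T by rewrite !trmx_mul trmxK mulmxA.
by rewrite mxE.
Qed.

Lemma qf_add {r} (C D : 'M[R]_r) x : qf (C + D) x = qf C x + qf D x.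
Proof. by rewrite /qf mulmxDr mulmxDl mxE. Qed.

Lemma qf_scale {r} (C : 'M[R]_r) a x : qf (a *: C) x = a * qf C x.
Proof. by rewrite /qf -scalemxAr -scalemxAl mxE. Qed.

Lemma qf_1 {r} (x : 'rV[R]_r) : qf 1%:M x = \sum_(j < r) x 0 j * x 0 j.
Proof.
rewrite /qf mulmx1 mxE; apply: eq_bigr => j _; by rewrite mxE.
Qed.

Lemma qf_ge {r} (x : 'rV[R]_r) k : x 0 k * x 0 k <= qf 1%:M x.
Proof.
rewrite qf_1 (bigD1 k) //= lerDl.
by apply: sumr_ge0 => j _; rewrite mul_self_ge0.
Qed.

Lemma qf_bound {r} (B : 'M[R]_r) x :
  `|qf B x| <= (\sum_(k < r) \sum_(l < r) `|B k l|) * qf 1%:M x.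
Proof.
rewrite qfE mulr_suml; apply: (le_trans (ler_norm_sum _ _ _)).
apply: ler_sum => k _; rewrite mulr_suml.
apply: (le_trans (ler_norm_sum _ _ _)); apply: ler_sum => l _.
have hk := qf_ge x k; have hl := qf_ge x l.
set N := qf 1%:M x in hk hl *.
rewrite !normrM.
have e1 : `|x 0 k| * `|x 0 k| = x 0 k * x 0 k.
  by rewrite -normrM ger0_norm // mul_self_ge0.
have e2 : `|x 0 l| * `|x 0 l| = x 0 l * x 0 l.
  by rewrite -normrM ger0_norm // mul_self_ge0.
have h1 := normr_ge0 (x 0 k); have h2 := normr_ge0 (x 0 l).
have h3 := normr_ge0 (B k l).
have : `|x 0 k| * `|x 0 l| <= N.
  have := sqr_ge0 (`|x 0 k| - `|x 0 l|). rewrite expr2. nra.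
move=> h; rewrite mulrC; apply: ler_wpM2l => //.
Qed.

Lemma psd_conj {n r} (U : 'M[R]_(n, r)) (P : 'M[R]_r) :
  P^T = P -> (forall v, 0 <= qf P v) -> psd (U *m P *m U^T).
Proof.
move=> hT hP; split.
  by rewrite !trmx_mul trmxK hT mulmxA.
move=> v; have := hP (v *m U); rewrite /qf trmx_mul !mulmxA.
done.
Qed.

Lemma diag_conj {n r} (U : 'M[R]_(n, r)) (P : 'M[R]_r) i :
  (U *m P *m U^T) i i = qf P (row i U).
Proof.
rewrite /qf !mxE; apply: eq_bigr => j _; rewrite !mxE; congr (_ * _).
by apply: eq_bigr => k _; rewrite !mxE.
Qed.

Lemma key {n r} (U : 'M[R]_(n, r)) (C : 'M[R]_r) :
  extreme_elliptope (U *m U^T) -> row_full U ->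
  (forall i, qf C (row i U) = 0) -> forall x, qf C x = 0.
Proof.
move=> [[hpsd hdiag] hext] /row_fullP [X hX] hC x.
pose B := C + C^T.
have hBT : B^T = B by rewrite /B linearD /= trmxK addrC.
have hB : forall y, qf B y = qf C y + qf C y by move=> y; rewrite qf_add qf_tr.
suff B0 : B = 0.
  have := hB x; rewrite B0 /qf mulmx0 mul0mx mxE => h.
  lra.
pose M := \sum_(k < r) \sum_(l < r) `|B k l|.
have M0 : 0 <= M by apply: sumr_ge0 => k _; apply: sumr_ge0 => l _.
pose t := (M + 1)^-1.
have t0 : 0 < t by rewrite invr_gt0; lra.
have tM : t * M <= 1.
  rewrite /t mulrC -(@ler_pM2r _ (M + 1)); last lra.
  rewrite -mulrA mulVf; last by rewrite gt_eqF //; lra.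
  lra.
have psdP : forall s, `|s| = t -> forall v, 0 <= qf (1%:M + s *: B) v.
  move=> s hs v; rewrite qf_add qf_scale.
  have hb := qf_bound B v.
  have N0 : 0 <= qf 1%:M v by rewrite qf_1; apply: sumr_ge0 => j _; apply: mul_self_ge0.
  have h1 : `|s * qf B v| <= t * (M * qf 1%:M v).
    by rewrite normrM hs ler_wpM2l // ltW.
  have h2 := ler_norm (- (s * qf B v)); rewrite normrN in h2.
  have h3 : t * M * qf 1%:M v <= qf 1%:M v.
    by rewrite -[X in _ <= X]mul1r; apply: ler_wpM2r.
  rewrite mulrA in h1; lra.
pose W := U *m B *m U^T.
have hA : forall s, U *m (1%:M + s *: B) *m U^T = U *m U^T + s *: W.
  by move=> s; rewrite mulmxDr mulmx1 -scalemxAr mulmxDl -scalemxAl.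
have ellA : forall s, `|s| = t -> elliptope (U *m (1%:M + s *: B) *m U^T).
  move=> s hs; split.
    apply: psd_conj; last exact: psdP.
    by rewrite linearD linearZ /= trmx1 hBT.
  move=> i; rewrite diag_conj qf_add qf_scale hB hC addr0 mulr0 addr0.
  by rewrite -diag_conj mulmx1 hdiag.
have t2 : `|- t| = t by rewrite normrN gtr0_norm.
have heq := hext _ _ (2^-1) (ellA t (gtr0_norm t0)) (ellA (- t) t2).
rewrite !hA in heq.
have W0 : W = 0.
  have h : U *m U^T + t *: W = U *m U^T + - t *: W.
    apply: heq.
    - by rewrite invr_gt0; lra.
    - rewrite invf_lt1; lra.
    - apply/matrixP => a b; by rewrite !mxE; field.
  move/addrI: h => h.
  apply/matrixP => a b; have := congr1 (fun Z : 'M[R]_n => Z a b) h.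
  rewrite [LHS]mxE [RHS]mxE => h'; rewrite [RHS]mxE.
  have : t * W a b = 0 by lra.
  by move/eqP; rewrite mulf_eq0 gt_eqF //= => /eqP.
have : X *m W *m X^T = B.
  by rewrite /W !mulmxA hX mul1mx -mulmxA -trmx_mul hX trmx1 mulmx1.
by rewrite W0 mulmx0 mul0mx.
Qed.

Lemma Re0 : complex.Re (0 : R[i]) = 0. Proof. by []. Qed.
Lemma Im0 : complex.Im (0 : R[i]) = 0. Proof. by []. Qed.
Lemma ReD (u v : R[i]) : complex.Re (u + v) = complex.Re u + complex.Re v.
Proof. by case: u => ? ?; case: v => ? ?. Qed.
Lemma ImD (u v : R[i]) : complex.Im (u + v) = complex.Im u + complex.Im v.
Proof. by case: u => ? ?; case: v => ? ?. Qed.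
Lemma ReM (c : R) (z : R[i]) : complex.Re (c%:C%C * z) = c * complex.Re z.
Proof. case: z => p q /=. ring. Qed.
Lemma ImM (c : R) (z : R[i]) : complex.Im (c%:C%C * z) = c * complex.Im z.
Proof. case: z => p q /=. ring. Qed.
End Aux.
Arguments qf {R r}.
Arguments key {R n r U C}.
Arguments qfE {R r}.

Theorem theorem2p3 (R : rcfType) (n r d : nat) (E : 'M[R]_n)
  (U : 'M[R]_(n, r)) (H1 H2 : 'I_r -> 'I_r -> 'M[R[i]]_d) :
  extreme_elliptope E ->
  \rank E = r ->
  E = Gram U ->
  row_full U ->
  (1 <= d)%N ->
  (forall k l, herm_mx (H1 k l)) ->
  (forall k l, herm_mx (H2 k l)) ->
  (forall i : 'I_n, quad_map H1 (row i U) = quad_map H2 (row i U)) ->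
  forall x : 'rV[R]_r, quad_map H1 x = quad_map H2 x.
Proof.
move=> hE _ hG hU _ _ _ hQ x.
have hext : extreme_elliptope (U *m U^T) by rewrite /Gram in hG; rewrite -hG.
apply/matrixP => a b.
pose D k l := H1 k l a b - H2 k l a b.
have qe : forall y, quad_map H1 y a b - quad_map H2 y a b =
    \sum_k \sum_l (y 0 k * y 0 l)%:C%C * D k l.
  move=> y; rewrite /quad_map !summxE -sumrB; apply: eq_bigr => k _.
  rewrite !summxE -sumrB; apply: eq_bigr => l _; rewrite !mxE mulrBr.
  by [].
have gen : forall f : R[i] -> R, f 0 = 0 -> (forall u v, f (u + v) = f u + f v) ->
    (forall c z, f (c%:C%C * z) = c * f z) ->
    forall y, f (quad_map H1 y a b - quad_map H2 y a b) =
              qf (\matrix_(k, l) f (D k l)) y.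
  move=> f f0 fD fM y; rewrite qe qfE (big_morph f fD f0).
  apply: eq_bigr => k _; rewrite (big_morph f fD f0).
  by apply: eq_bigr => l _; rewrite fM mxE.
have part : forall f : R[i] -> R, f 0 = 0 -> (forall u v, f (u + v) = f u + f v) ->
    (forall c z, f (c%:C%C * z) = c * f z) ->
    f (quad_map H1 x a b - quad_map H2 x a b) = 0.
  move=> f f0 fD fM; rewrite gen //; apply: (key hext hU) => i.
  by rewrite -gen // hQ subrr.
apply/eqP; rewrite -subr_eq0; apply/eqP.
have hre := part (@complex.Re R) (Re0 R) (@ReD R) (@ReM R).
have him := part (@complex.Im R) (Im0 R) (@ImD R) (@ImM R).
move: hre him; case: (quad_map H1 x a b - quad_map H2 x a b) => p q /= -> ->.
by [].
Qed.
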